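(* Let $(n_m,k_m)_{m\ge1}$ be a sequence of pairs of integers with $k_m\ge 2$ and $n_m\ge k_m$, and let $P_m$ be the probability that a uniformly random composition of $n_m$ into $k_m$ positive parts has two equal parts (i.e. $x_i=x_j$ for some $i<j$). If $n_m/k_m^3\to\infty$ then $P_m\to 0$; if $n_m/k_m^3\to 0$ then $P_m\to 1$. Equivalently, writing $\mathcal D(n,k)$ for the number of compositions of $n$ into $k$ pairwise distinct positive parts and $\mathcal C(n,k)=\binom{n-1}{k-1}$, we have $\mathcal D(n,k)/\mathcal C(n,k)\to 1$ as $n/k^3\to\infty$ and $\mathcal D(n,k)/\mathcal C(n,k)\to 0$ as $n/k^3\to 0$.
   Context: A composition of a positive integer $n$ into $k$ positive parts is a sequence $(x_1,\dots,x_k)$ of positive integers with $x_1+\dots+x_k=n$; there are $\binom{n-1}{k-1}$ of them, and ''uniformly random'' means each is chosen with equal probability. *)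

(* Defs.v *)
From mathcomp Require Import all_boot.
From Stdlib Require Import Reals.

Set Implicit Arguments.
Unset Strict Implicit.
Unset Printing Implicit Defensive.

(* A composition of n into k positive parts: a function x : 'I_k -> {0..n}
   with all parts positive and sum n (parts are automatically <= n). *)
Definition compositions (n k : nat) : {set {ffun 'I_k -> 'I_n.+1}} :=
  [set x : {ffun 'I_k -> 'I_n.+1} | (\sum_(i < k) (x i : nat) == n) && [forall i, 0 < (x i : nat)]].

Definition comps_with_equal_parts (n k : nat) : {set {ffun 'I_k -> 'I_n.+1}} :=
  [set x in compositions n k | [exists i : 'I_k, exists j : 'I_k,
                                 (i < j) && (x i == x j)]].

Definition prob_equal_parts (n k : nat) : R :=
  Rdiv (INR #|comps_with_equal_parts n k|) (INR #|compositions n k|).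

(* Main.v *)
Require Import Defs.
From Stdlib Require Import Lra.
From mathcomp Require Import all_boot zify.

Lemma inj_card (T T' : finType) (A : {set T}) (B : {set T'}) (f : T -> T') :
  {in A &, injective f} -> (forall x, x \in A -> f x \in B) -> #|A| <= #|B|.
Proof.
move=> inj fAB; rewrite -(card_in_imset inj); apply: subset_leq_card.
by apply/subsetP => y /imsetP [x xA ->]; apply: fAB.
Qed.

Lemma compE n k (x : {ffun 'I_k -> 'I_n.+1}) :
  (x \in compositions n k) = (\sum_i (x i : nat) == n) && [forall i, 0 < (x i : nat)].
Proof. by rewrite inE. Qed.

Lemma two_le_sum k (F : 'I_k -> nat) i j : i != j -> F i + F j <= \sum_l F l.
Proof.
move=> ij; rewrite (bigD1 i) //= (bigD1 j) /=; [lia|by rewrite eq_sym].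
Qed.

Lemma one_le_sum k (F : 'I_k -> nat) i : F i <= \sum_l F l.
Proof. by rewrite (bigD1 i) //= leq_addr. Qed.

Lemma comp0k k : #|compositions 0 k| = (k == 0).
Proof.
case: k => [|k].
  have -> : compositions 0 0 = [set: _].
    by apply/setP => x; rewrite compE big_ord0 inE /=; apply/forallP => -[].
  by rewrite cardsT card_ffun !card_ord.
apply/eqP; rewrite cards_eq0; apply/eqP/setP => x; rewrite compE inE.
apply/negP => /andP [/eqP s /forallP /(_ ord0)].
move=> H1; have := leq_trans H1 (@one_le_sum _ (fun i => (x i : nat)) ord0); by rewrite s.
Qed.

Lemma comp_sum {N k} {x : {ffun 'I_k -> 'I_N.+1}} :
  x \in compositions N k -> \sum_i (x i : nat) = N.
Proof. by rewrite compE => /andP [/eqP]. Qed.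

Lemma comp_pos {N k} {x : {ffun 'I_k -> 'I_N.+1}} i :
  x \in compositions N k -> 0 < (x i : nat).
Proof. by rewrite compE => /andP [_ /forallP]. Qed.

Lemma comp_bound2 {N k} {x : {ffun 'I_k -> 'I_N.+1}} {i j} :
  x \in compositions N k -> i != j -> (x i : nat) + x j <= N.
Proof.
move=> xin ij; have := @two_le_sum _ (fun l => (x l : nat)) _ _ ij.
by rewrite (comp_sum xin).
Qed.

Lemma compI {N k} {x : {ffun 'I_k -> 'I_N.+1}} :
  \sum_i (x i : nat) = N -> (forall i, 0 < (x i : nat)) -> x \in compositions N k.
Proof. by move=> s p; rewrite compE s eqxx; apply/forallP. Qed.

Definition S1 n k := [set x : {ffun 'I_k.+1 -> 'I_n.+2} | (x ord0 : nat) == 1].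

Lemma pa_le n k : #|compositions n.+1 k.+1 :&: S1 n k| <= #|compositions n k|.
Proof.
have bd : forall x, x \in compositions n.+1 k.+1 :&: S1 n k -> forall l,
   (x (lift ord0 l) : nat) < n.+1.
  move=> x; rewrite !inE -compE => /andP [xin /eqP x1] l.
  have := comp_bound2 xin (neq_lift ord0 l); by rewrite x1 add1n ltnS.
apply: (@inj_card _ _ _ _ (fun x : {ffun 'I_k.+1 -> 'I_n.+2} => [ffun l : 'I_k => (inord (x (lift ord0 l)) : 'I_n.+1)])).
- move=> x y xin yin /ffunP E; apply/ffunP => i; apply: ord_inj.
  case: (unliftP ord0 i) => [l ->|->].
    have := E l; rewrite !ffunE => /(congr1 (@nat_of_ord _)); rewrite !inordK ?bd //.
  by move: xin yin; rewrite !inE => /andP [_ /eqP ->] /andP [_ /eqP ->].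
- move=> x xin; have bdx := bd _ xin; case/setIP: xin => xin; rewrite inE => /eqP x1.
  apply: compI => [|l]; last by rewrite ffunE inordK // (comp_pos _ xin).
  rewrite (eq_bigr (fun l => (x (lift ord0 l) : nat))) => [|l _]; last by rewrite ffunE inordK.
  by have := comp_sum xin; rewrite big_ord_recl x1 add1n => -[].
Qed.

Lemma pa_ge n k : #|compositions n k| <= #|compositions n.+1 k.+1 :&: S1 n k|.
Proof.
apply: (@inj_card _ _ _ _ (fun y : {ffun 'I_k -> 'I_n.+1} => [ffun i : 'I_k.+1 => if unlift ord0 i is Some l then
     (inord (y l) : 'I_n.+2) else inord 1])).
- move=> x y xin yin /ffunP E; apply/ffunP => l; apply: ord_inj.
  by have := E (lift ord0 l); rewrite !ffunE liftK => /(congr1 (@nat_of_ord _)); rewrite !inordK // ltnS ltnW.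
- move=> y yin; rewrite inE; apply/andP; split; last by rewrite inE ffunE unlift_none inordK.
  apply: compI => [|i].
    rewrite big_ord_recl ffunE unlift_none inordK // add1n.
    rewrite (eq_bigr (fun l => (y l : nat))) ?(comp_sum yin) // => l _.
    by rewrite ffunE liftK inordK // ltnS ltnW.
  rewrite ffunE; case: unliftP => [l|]; last by rewrite inordK.
  by rewrite inordK ?(comp_pos _ yin) // ltnS ltnW.
Qed.

Lemma sum_ind0 k : \sum_(i < k.+1) ((i == ord0) : nat) = 1.
Proof.
by rewrite big_ord_recl eqxx big1.
Qed.

Lemma pb_le n k : #|compositions n.+1 k.+1 :\: S1 n k| <= #|compositions n k.+1|.
Proof.
have info : forall x, x \in compositions n.+1 k.+1 :\: S1 n k ->
   [/\ x \in compositions n.+1 k.+1, 1 < (x ord0 : nat) &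
   forall i, (x i : nat) - (i == ord0) < n.+1 /\ 0 < (x i : nat) - (i == ord0)].
  move=> x /setDP [xin]; rewrite inE => x1.
  have x0 : 1 < (x ord0 : nat) by have := comp_pos ord0 xin; move: x1; case: (x ord0 : nat) => [|[|]].
  split => // i; case: (eqVneq i ord0) => [->|ne].
    have := ltn_ord (x ord0); rewrite ?eqxx /=; set a := (x ord0 : nat) in x0 *; lia.
  rewrite ?(negbTE ne) subn0 (comp_pos i xin); split => //.
  have := comp_bound2 xin ne; set a := (x ord0 : nat) in x0 *; set b := (x i : nat); lia.
apply: (@inj_card _ _ _ _ (fun x : {ffun 'I_k.+1 -> 'I_n.+2} => [ffun i : 'I_k.+1 => (inord (x i - (i == ord0)) : 'I_n.+1)])).
- move=> x y /info [_ _ bx] /info [_ _ bi] /ffunP E; apply/ffunP => i; apply: ord_inj.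
  have := E i; rewrite !ffunE => /(congr1 (@nat_of_ord _)); rewrite !inordK; try by case: (bx i); try by case: (bi i).
  case: (bx i) => _; case: (bi i) => _; move: (x i : nat) (y i : nat) (nat_of_bool (i == ord0)) => a b c; lia.
- move=> x /info [xin x0 bx]; apply: compI => [|i]; last first.
    by rewrite ffunE inordK; case: (bx i).
  rewrite (eq_bigr (fun i => (x i : nat) - (i == ord0))) => [|i _]; last by rewrite ffunE inordK; case: (bx i).
  rewrite big_ord_recl eqxx (eq_bigr (fun l => (x (lift ord0 l) : nat))) => [|l _]; last by rewrite subn0.
  have := comp_sum xin; rewrite big_ord_recl; set s := (\sum_(i < k) _); set a := (x ord0 : nat) in x0 *; simpl; lia.
Qed.

Lemma pb_ge n k : #|compositions n k.+1| <= #|compositions n.+1 k.+1 :\: S1 n k|.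
Proof.
have bd : forall (z : 'I_n.+1) (b : bool), (z : nat) + b < n.+2.
  by move=> z b; have := ltn_ord z; case: b => /=; lia.
apply: (@inj_card _ _ _ _ (fun y : {ffun 'I_k.+1 -> 'I_n.+1} => [ffun i : 'I_k.+1 => (inord (y i + (i == ord0)) : 'I_n.+2)])).
- move=> x y xin yin /ffunP E; apply/ffunP => i; apply: ord_inj.
  have := E i; rewrite !ffunE => /(congr1 (@nat_of_ord _)); rewrite !inordK ?bd //.
  by move/eqP; rewrite eqn_add2r => /eqP.
- move=> y yin; apply/setDP; split; last first.
    rewrite inE ffunE eqxx inordK ?bd //.
    by rewrite addn1 eqSS -lt0n (comp_pos ord0 yin).
  apply: compI => [|i]; last by rewrite ffunE inordK ?bd // addn_gt0 (comp_pos i yin).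
  rewrite (eq_bigr (fun i => (y i : nat) + (i == ord0))) => [|i _]; last by rewrite ffunE inordK ?bd.
  by rewrite big_split /= sum_ind0 (comp_sum yin) addn1.
Qed.

Lemma pascal n k : #|compositions n.+1 k.+1| = #|compositions n k| + #|compositions n k.+1|.
Proof.
rewrite -(cardsID (S1 n k)); congr (_ + _); apply/eqP; rewrite eqn_leq.
  by rewrite pa_le pa_ge.
by rewrite pb_le pb_ge.
Qed.

Lemma comp_count n k : #|compositions n.+1 k.+1| = 'C(n, k).
Proof.
elim: n k => [|n IH] k.
  by rewrite pascal !comp0k; case: k.
rewrite pascal IH; case: k => [|k]; last by rewrite IH binS addnC.
rewrite !bin0; suff -> : #|compositions n.+1 0| = 0 by [].
apply/eqP; rewrite cards_eq0; apply/eqP/setP => x.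
by rewrite compE big_ord0 inE.
Qed.

Lemma comp_bound1 {N k} {x : {ffun 'I_k -> 'I_N.+1}} i :
  x \in compositions N k -> (x i : nat) <= N.
Proof. by move=> _; rewrite -ltnS ltn_ord. Qed.

Lemma sum_eq1 k (l0 : 'I_k) : \sum_(l < k) ((l == l0) : nat) = 1.
Proof. by rewrite (bigD1 l0) //= eqxx big1 // => l /negbTE ->. Qed.

Definition fmerge {n k} (i j : 'I_k.+1) (x : {ffun 'I_k.+1 -> 'I_n.+1}) : {ffun 'I_k -> 'I_n.+1} :=
  [ffun l : 'I_k => inord (x (lift j l) + (lift j l == i) * x j)].

Lemma fmerge_val n k (i j : 'I_k.+1) x l : i != j -> x \in compositions n k.+1 ->
  (fmerge i j x l : nat) = x (lift j l) + (lift j l == i) * x j.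
Proof.
move=> ij xin; rewrite ffunE inordK // ltnS.
case: eqP => [->|_]; first by rewrite mul1n comp_bound2.
by rewrite mul0n addn0 comp_bound1.
Qed.

Lemma fmerge_comp n k (i j : 'I_k.+1) x : i != j -> x \in compositions n k.+1 ->
  fmerge i j x \in compositions n k.
Proof.
move=> ij xin; apply: compI => [|l]; last first.
  by rewrite fmerge_val // (leq_trans (comp_pos (lift j l) xin)) ?leq_addr.
rewrite (eq_bigr (fun l => (x (lift j l) : nat) + (lift j l == i) * x j)) => [|l _]; last by rewrite fmerge_val.
case: (unliftP j i) => [l0 ei|ei]; last by rewrite ei eqxx in ij.
rewrite big_split /= -big_distrl /= ei.
have -> : \sum_(l < k) ((lift j l == lift j l0) : nat) = 1.
  by rewrite -(sum_eq1 _ l0); apply: eq_bigr => l _; rewrite (inj_eq lift_inj).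
by have := comp_sum xin; rewrite (bigD1_ord j) //= addnC mul1n.
Qed.

Lemma fmerge_inj n k (i j : 'I_k.+1) x y : i != j -> x \in compositions n k.+1 ->
  y \in compositions n k.+1 -> x i = x j -> y i = y j -> fmerge i j x = fmerge i j y -> x = y.
Proof.
move=> ij xin yin xij yij /ffunP E.
have E' l : (x (lift j l) : nat) + (lift j l == i) * x j = y (lift j l) + (lift j l == i) * y j.
  by rewrite -!fmerge_val // E.
case: (unliftP j i) => [l0 ei|ei]; last by rewrite ei eqxx in ij.
have xyj : x j = y j.
  apply: ord_inj; have := E' l0; rewrite -ei eqxx !mul1n xij yij.
  move: (x j : nat) (y j : nat) => a b; lia.
apply/ffunP => t; case: (unliftP j t) => [l ->|->] //.
case: (eqVneq (lift j l) i) => [e|ne].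
  by rewrite e xij yij.
by apply: ord_inj; have := E' l; rewrite (negbTE ne) !mul0n !addn0.
Qed.

Lemma cwe_le n k : #|comps_with_equal_parts n k.+1| <= k.+1 * k.+1 * #|compositions n k|.
Proof.
pose pk (x : {ffun 'I_k.+1 -> 'I_n.+1}) := odflt (ord0, ord0)
  [pick p : 'I_k.+1 * 'I_k.+1 | (p.1 < p.2) && (x p.1 == x p.2)].
have pkP : forall x, x \in comps_with_equal_parts n k.+1 ->
   [/\ x \in compositions n k.+1, (pk x).1 != (pk x).2 & x (pk x).1 = x (pk x).2].
  move=> x; rewrite inE => /andP [xin /existsP [i /existsP [j /andP [ij e]]]].
  rewrite /pk; case: pickP => [p /andP [pl pe]|/(_ (i,j))]; last by rewrite /= ij e.
  by split => //; [rewrite neq_ltn pl | apply/eqP].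
apply: (@leq_trans #|setX [set: 'I_k.+1 * 'I_k.+1] (compositions n k)|); last first.
  by rewrite cardsX cardsT card_prod !card_ord.
apply: (@inj_card _ _ _ _ (fun x => (pk x, fmerge (pk x).1 (pk x).2 x))).
- move=> x y /pkP [xin ne xe] /pkP [yin _ ye] [E1 E2].
  rewrite -E1 in ye E2; exact: (@fmerge_inj _ _ _ _ _ _ ne xin yin xe ye E2).
- move=> x /pkP [xin ne _]; rewrite inE /= in_setT; exact: fmerge_comp.
Qed.

Definition distc n k := [set x in compositions n k | injectiveb x].

Lemma sum_sub1 k (F : 'I_k -> nat) : (forall i, 0 < F i) ->
  \sum_i (F i - 1) = \sum_i F i - k.
Proof.
move=> Fp; have -> : \sum_i F i = \sum_i (F i - 1) + \sum_(i < k) 1.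
  by rewrite -big_split; apply: eq_bigr => i _ /=; rewrite subnK.
by rewrite sum_nat_const card_ord muln1 addnK.
Qed.

Lemma comp_bound_k {N k} {x : {ffun 'I_k.+1 -> 'I_N.+1}} i :
  x \in compositions N k.+1 -> (x i : nat) + k <= N.
Proof.
move=> xin; have := comp_sum xin; rewrite (bigD1_ord i) //= => H; apply: (leq_trans _ (eq_leq H)).
rewrite leq_add2l; apply: (@leq_trans (\sum_(l < k) 1)).
  by rewrite sum_nat_const card_ord muln1.
by apply: leq_sum => l _; apply: (comp_pos _ xin).
Qed.

Definition P2 n k := [set x : {ffun 'I_k -> 'I_n.+1} | [forall i, 1 < (x i : nat)]].

Lemma b0_le n k : #|distc n k.+1 :&: P2 n k.+1| <= #|distc (n - k.+1) k.+1|.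
Proof.
have info : forall x, x \in distc n k.+1 :&: P2 n k.+1 ->
  [/\ x \in compositions n k.+1, injective x, forall i, 1 < (x i : nat) &
      forall i, (x i : nat) - 1 < (n - k.+1).+1].
  move=> x; rewrite !inE -compE => /andP [/andP [xin /injectiveP xinj] /forallP xp].
  split => // i; have := comp_bound_k i xin; have := xp i.
  move: (x i : nat) => a; lia.
apply: (@inj_card _ _ _ _ (fun x : {ffun 'I_k.+1 -> 'I_n.+1} =>
   [ffun i : 'I_k.+1 => (inord ((x i : nat) - 1) : 'I_(n - k.+1).+1)])).
- move=> x y /info [_ _ xp bx] /info [_ _ yp bi] /ffunP E; apply/ffunP => i; apply: ord_inj.
  have := E i; rewrite !ffunE => /(congr1 (@nat_of_ord _)); rewrite !inordK //.
  have := xp i; have := yp i; move: (x i : nat) (y i : nat) => a b; lia.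
- move=> x /info [xin xinj xp bx]; apply/setIdP; split.
    apply: compI => [|i]; last by rewrite ffunE inordK // subn_gt0.
    rewrite (eq_bigr (fun i => (x i : nat) - 1)) => [|i _]; last by rewrite ffunE inordK.
    rewrite sum_sub1 ?(comp_sum xin) // => i; exact: (comp_pos _ xin).
  apply/injectiveP => i j; rewrite !ffunE => /(congr1 (@nat_of_ord _)); rewrite !inordK // => e.
  apply: xinj; apply: ord_inj; move: e; have := xp i; have := xp j.
  move: (x i : nat) (x j : nat) => a b; lia.
Qed.

Lemma b1_le n k : #|distc n k.+1 :\: P2 n k.+1| <= k.+1 * #|distc (n - k.+1) k|.
Proof.
pose pi (x : {ffun 'I_k.+1 -> 'I_n.+1}) := odflt ord0 [pick i | (x i : nat) == 1].
have info : forall x, x \in distc n k.+1 :\: P2 n k.+1 ->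
  [/\ x \in compositions n k.+1, injective x, (x (pi x) : nat) = 1,
      forall l, 1 < (x (lift (pi x) l) : nat) &
      forall l, (x (lift (pi x) l) : nat) - 1 < (n - k.+1).+1].
  move=> x; rewrite !inE -compE => /andP [/negP xp /andP [xin /injectiveP xinj]].
  have x1 : (x (pi x) : nat) = 1.
    rewrite /pi; case: pickP => [i /eqP //|H]; case: xp; apply/forallP => i.
    have := H i; have := comp_pos i xin; move: (x i : nat) => a /= ? /negbT; lia.
  have gt1 : forall l, 1 < (x (lift (pi x) l) : nat).
    move=> l; have ne : x (lift (pi x) l) != x (pi x).
      by apply/negP => /eqP /xinj /eqP; rewrite eq_sym (negbTE (neq_lift _ _)).
    move: ne; have := comp_pos (lift (pi x) l) xin; rewrite -(inj_eq val_inj) /= x1.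
    move: (x (lift (pi x) l) : nat) => a; lia.
  split => // l; have := comp_bound_k (lift (pi x) l) xin; have := gt1 l.
  move: (x (lift (pi x) l) : nat) => a; lia.
apply: (@leq_trans #|setX [set: 'I_k.+1] (distc (n - k.+1) k)|); last first.
  by rewrite cardsX cardsT card_ord.
apply: (@inj_card _ _ _ _ (fun x : {ffun 'I_k.+1 -> 'I_n.+1} => (pi x,
   [ffun l : 'I_k => (inord ((x (lift (pi x) l) : nat) - 1) : 'I_(n - k.+1).+1)]))).
- move=> x y /info [_ _ x1 xp bx] /info [_ _ y1 yp bi] [E1 /ffunP E].
  rewrite -E1 in y1 yp bi E.
  apply/ffunP => t; apply: ord_inj; case: (unliftP (pi x) t) => [l ->|->]; last by rewrite x1 y1.
  have := E l; rewrite !ffunE => /(congr1 (@nat_of_ord _)); rewrite !inordK //.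
  have := xp l; have := yp l; move: (x _ : nat) (y _ : nat) => a b; lia.
- move=> x /info [xin xinj x1 xp bx]; rewrite inE in_setT /=; apply/setIdP; split.
    apply: compI => [|l]; last by rewrite ffunE inordK // subn_gt0.
    rewrite (eq_bigr (fun l => (x (lift (pi x) l) : nat) - 1)) => [|l _]; last by rewrite ffunE inordK.
    rewrite sum_sub1; last by move=> l; apply: (comp_pos _ xin).
    have := comp_sum xin; rewrite (bigD1_ord (pi x)) //= x1.
    move: (\sum_(i < k) _) => s; lia.
  apply/injectiveP => i j; rewrite !ffunE => /(congr1 (@nat_of_ord _)); rewrite !inordK // => e.
  apply: (@lift_inj _ (pi x)); apply: xinj; apply: ord_inj; move: e; have := xp i; have := xp j.
  move: (x (lift (pi x) i) : nat) (x (lift (pi x) j) : nat) => a b; lia.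
Qed.

Lemma dist_rec n k : #|distc n k.+1| <= k.+1 * #|distc (n - k.+1) k| + #|distc (n - k.+1) k.+1|.
Proof.
rewrite -(cardsID (P2 n k.+1)) addnC; apply: leq_add; [exact: b1_le | exact: b0_le].
Qed.

Lemma bin_tele x L r : 'C(x + L, r.+1) = 'C(x, r.+1) + \sum_(t < L) 'C(x + t, r).
Proof.
elim: L => [|L IH]; first by rewrite addn0 big_ord0 addn0.
by rewrite addnS binS IH big_ord_recr /= addnA.
Qed.

Lemma bin_step m s r : s.+1 <= m ->
  'C(m - s, r) + 'C(m + s, r) <= 'C(m - s.+1, r) + 'C(m + s.+1, r).
Proof.
move=> sm; case: r => [|r]; first by rewrite !bin0.
have -> : m - s = (m - s.+1).+1 by lia.
rewrite addnS !binS.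
have : 'C(m - s.+1, r) <= 'C(m + s, r) by apply: leq_bin2l; lia.
lia.
Qed.

Lemma bin_conv_s m s r : s <= m -> 2 * 'C(m, r) <= 'C(m - s, r) + 'C(m + s, r).
Proof.
elim: s => [|s IH] sm; first by rewrite subn0 addn0; lia.
apply: leq_trans (IH (ltnW sm)) (@bin_step m s r sm).
Qed.

Lemma bin_pair u v m r : 2 * m <= u + v -> 2 * 'C(m, r) <= 'C(u, r) + 'C(v, r).
Proof.
wlog uv : u v / u <= v.
  move=> H huv; case: (leqP u v) => [/H -> //|/ltnW vu].
  by rewrite addnC H // addnC.
move=> huv; case: (leqP m u) => [mu|um].
  have := leq_bin2l r mu; have := leq_bin2l r (leq_trans mu uv); lia.
have := @bin_conv_s m (m - u) r (leq_subr u m); rewrite subKn ?(ltnW um) // => H.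
apply: (leq_trans H); rewrite leq_add2l; apply: leq_bin2l; lia.
Qed.

Lemma bin_sum_ge x L m r : 2 * m <= 2 * x + L - 1 ->
  L * 'C(m, r) <= \sum_(t < L) 'C(x + t, r).
Proof.
move=> hm; rewrite -(leq_pmul2l (isT : 0 < 2)).
have -> : 2 * \sum_(t < L) 'C(x + t, r) =
    \sum_(t < L) ('C(x + t, r) + 'C(x + (L - t.+1), r)).
  rewrite big_split /= mul2n -addnn; congr (_ + _).
  by rewrite (reindex_inj rev_ord_inj) /=.
have -> : 2 * (L * 'C(m, r)) = \sum_(t < L) (2 * 'C(m, r)).
  by rewrite sum_nat_const card_ord; lia.
apply: leq_sum => t _; apply: bin_pair.
have := ltn_ord t; lia.
Qed.

Lemma rec_ineq n r b d : 2 * d <= r.+1 -> r.+2 <= n -> (r = 0 -> b = 0) ->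
  r.+2 * 'C(n - r.+2 - b, r) + 'C(n - r.+2 - (b + d), r.+1) <= 'C(n - (b + d), r.+1).
Proof.
move=> hd hn hb; have hb' : 0 < r \/ b = 0 by case: r hd hn hb => [|r]; [right; apply: hb | left].
case: (ltnP (n - r.+2 - b) r) => [small|big].
  rewrite bin_small // muln0 add0n; apply: leq_bin2l; lia.
have e1 : n - r.+2 - (b + d) = (n - r.+2 - b) - d by lia.
have e2 : n - (b + d) = ((n - r.+2 - b) - d) + r.+2 by lia.
rewrite e1 e2 bin_tele addnC leq_add2l; apply: bin_sum_ge; lia.
Qed.

Fixpoint beta k := if k is k'.+1 then beta k' + k'./2 else 0.

Lemma beta_lb k : k * k <= 4 * beta k + 3 * k.
Proof.
elim: k => [|k IH] //=.
have h := odd_double_half k; rewrite -muln2 in h.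
have : (odd k : nat) <= 1 by case: (odd k).
move: (odd k : nat) (k./2) (beta k) h IH => o h b. lia.
Qed.

Lemma beta_step k : 2 * (beta k.+2 - beta k.+1) <= k.+1 /\ beta k.+1 <= beta k.+2.
Proof.
rewrite /=; have h := odd_double_half k.+1; rewrite -muln2 in h.
move: (odd k.+1 : nat) ((k.+1)./2) (beta k + k./2) h => o h b; lia.
Qed.

Lemma dist_sub n k : #|distc n k| <= #|compositions n k|.
Proof. by apply: subset_leq_card; apply/subsetP => x; rewrite inE => /andP []. Qed.

Lemma dist_bound n k : #|distc n k.+1| <= 'C(n - beta k.+1, k).
Proof.
elim/ltn_ind: n k => n IH [|k].
  apply: (leq_trans (dist_sub _ _)); rewrite /= bin0.
  by case: n {IH} => [|n]; rewrite ?comp0k ?comp_count ?bin0.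
case: (ltnP n k.+2) => [small|big].
  suff -> : #|distc n k.+2| = 0 by [].
  apply/eqP; rewrite cards_eq0; apply/eqP/setP => x; rewrite inE [RHS]inE.
  apply/negP => /andP [xin _]; have := comp_bound_k ord0 xin; have := comp_pos ord0 xin.
  move: (x ord0 : nat) => a; lia.
apply: (leq_trans (dist_rec n k.+1)).
have lt : n - k.+2 < n by lia.
have [h1 h2] := beta_step k.
apply: leq_trans (leq_add (leq_mul (leqnn k.+2) (IH _ lt k)) (IH _ lt k.+1)) _.
have := @rec_ineq n k (beta k.+1) (beta k.+2 - beta k.+1) h1 big.
rewrite subnKC //; apply.
by move=> k0; rewrite k0.
Qed.

Lemma binratio_i a d r : 'C(a - d, r) * a ^ r <= (a - d) ^ r * 'C(a, r).
Proof.
elim: r => [|r IH]; first by rewrite !expn0 !bin0.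
rewrite -(leq_pmul2l (ltn0Sn r)).
have e1 : r.+1 * ('C(a - d, r.+1) * a ^ r.+1) = ('C(a - d, r) * a ^ r) * ((a - d - r) * a).
  rewrite mulnA mul_bin_left expnS; move: ('C(_, r)) (a ^ r) => c e; nia.
have e2 : r.+1 * ((a - d) ^ r.+1 * 'C(a, r.+1)) = ((a - d) ^ r * 'C(a, r)) * ((a - d) * (a - r)).
  rewrite mulnCA mul_bin_left expnS; move: ('C(a, r)) ((a - d) ^ r) => c e; nia.
rewrite e1 e2; apply: leq_mul => //.
case: (leqP (d + r) a) => h; last by have -> : a - d - r = 0 by lia.
nia.
Qed.

Lemma binratio_ii a d r : d <= a -> (a - d) ^ r * (a + r * d) <= a ^ r.+1.
Proof.
move=> da; elim: r => [|r IH]; first by rewrite expn0 mul0n addn0 mul1n expn1.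
have h : (a - d) * (a + r.+1 * d) <= a * (a + r * d) by nia.
apply: (@leq_trans ((a - d) ^ r * (a * (a + r * d)))).
  by rewrite expnS [(a - d) * _]mulnC -mulnA leq_mul.
by rewrite mulnCA [a ^ r.+2]expnS leq_mul.
Qed.

Lemma binratio a d r : 'C(a - d, r) * (a + r * d) <= a * 'C(a, r).
Proof.
case: (leqP d a) => da; last first.
  case: r => [|r]; first by rewrite bin0 mul0n addn0 mul1n; case: (a) => // ?; rewrite bin0 muln1.
  by rewrite (_ : a - d = 0) ?bin0n ?mul0n //; lia.
case: a da => [|a] da.
  by rewrite (_ : d = 0) ?bin0n; case: r => //; lia.
rewrite -(leq_pmul2l (expn_gt0 a.+1 r)).
apply: (@leq_trans ((a.+1 - d) ^ r * 'C(a.+1, r) * (a.+1 + r * d))).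
  by rewrite mulnA [_ * 'C(_, _)]mulnC leq_mul // binratio_i.
apply: (@leq_trans ('C(a.+1, r) * a.+1 ^ r.+1)).
  by rewrite mulnAC mulnC leq_mul // binratio_ii.
by rewrite expnS mulnC mulnA [a.+1 ^ r * _]mulnC.
Qed.

Lemma big_K K b : 20 <= K -> K * K <= 4 * b + 3 * K -> K ^ 3 <= 16 * ((K - 1) * (b - 1)).
Proof. move=> h1 h2; rewrite expnS expnS expn1. nia. Qed.

Lemma cwe_dist n k : #|comps_with_equal_parts n k| + #|distc n k| = #|compositions n k|.
Proof.
have e1 : distc n k = compositions n k :&: distc n k.
  by apply/esym/setIidPr/subsetP => x; rewrite inE => /andP [].
have e2 : comps_with_equal_parts n k = compositions n k :\: distc n k.
  apply/setP => x; rewrite !inE -!compE; case: (x \in compositions n k) => //=; rewrite ?andbT.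
  apply/idP/idP.
    move=> /existsP [i /existsP [j /andP [ij /eqP e]]]; apply/negP => /injectiveP inj.
    by move: ij; rewrite (inj _ _ e) ltnn.
  apply: contraR => /existsPn H; rewrite ?negbK; apply/injectiveP => i j e.
  case: (ltngtP i j) => [ij|ji|/ord_inj //].
    by move/existsPn: (H i) => /(_ j); rewrite ij e eqxx.
  by move/existsPn: (H j) => /(_ i); rewrite ji e eqxx.
by rewrite -(cardsID (distc n k) (compositions n k)) -e1 -e2 addnC.
Qed.

Lemma part1_nat n k : 1 <= k -> k < n ->
  #|comps_with_equal_parts n k.+1| * (n - k) <= k.+1 * k.+1 * k * #|compositions n k.+1|.
Proof.
case: n => [|n]; first by [].
case: k => [|k] // _ kn.
apply: (@leq_trans (k.+2 * k.+2 * #|compositions n.+1 k.+1| * (n.+1 - k.+1))).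
  by rewrite leq_mul2r cwe_le orbT.
rewrite !comp_count -!mulnA leq_mul2l; apply/orP; right.
rewrite leq_mul2l; apply/orP; right.
by rewrite subSS mulnC -mul_bin_left.
Qed.

Lemma part2_nat n k : 1 <= k -> k < n ->
  #|distc n k.+1| * (k * (beta k.+1 - 1)) <= (n - 1) * #|compositions n k.+1|.
Proof.
case: n => [|n]; first by [].
move=> k1 kn; rewrite comp_count (_ : n.+1 - 1 = n); last by rewrite subn1.
case: (posnP (beta k.+1)) => b0.
  by rewrite b0 /= muln0 muln0.
apply: (leq_trans _ (binratio n (beta k.+1 - 1) k)).
apply: (@leq_trans ('C(n.+1 - beta k.+1, k) * (k * (beta k.+1 - 1)))).
  by rewrite leq_mul2r dist_bound orbT.
have -> : n - (beta k.+1 - 1) = n.+1 - beta k.+1 by lia.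
by rewrite leq_mul2l leq_addl orbT.
Qed.

Lemma part2_full N K : 20 <= K -> K <= N ->
  #|distc N K| * (K * K * K) <= 16 * N * #|compositions N K|.
Proof.
case: K => [|k] // hK hN.
have h1 := @part2_nat N k (leq_trans (isT : 1 <= 19) hK) hN.
have h2 := @big_K k.+1 (beta k.+1) hK (beta_lb k.+1).
move: h1 h2; rewrite !expnS expn0.
move: #|distc N k.+1| #|compositions N k.+1| (beta k.+1) => d c b h1 h2.
apply: (@leq_trans (16 * (d * (k * (b - 1))))).
  have := leq_mul (leqnn d) h2; move: (b - 1) => e; lia.
rewrite -mulnA leq_mul2l; apply/orP; right.
apply: (leq_trans h1); rewrite leq_mul2r leq_subr orbT //.
Qed.

Lemma part1_full N K : 2 <= K -> K <= N ->
  #|comps_with_equal_parts N K| * (N - K.-1) <= K * K * K * #|compositions N K|.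
Proof.
case: K => [|k] // hK hN.
apply: (leq_trans (@part1_nat N k hK hN)).
by rewrite leq_mul2r leq_mul2l ltnW ?orbT.
Qed.

Lemma comp_pos_card N K : 1 <= K -> K <= N -> 0 < #|compositions N K|.
Proof.
case: K => [|k] // _; case: N => [|N] // h.
by rewrite comp_count bin_gt0.
Qed.

From Stdlib Require Import Reals.
Open Scope R_scope.

Lemma real1 (w c N NK K3 x eps : R) : 0 < c -> 0 <= w -> 0 < eps -> 0 < K3 ->
  x <= K3 -> N - K3 <= NK -> w * NK <= x * c -> 1 + 1/eps < N / K3 ->
  Rabs (w / c - 0) < eps.
Proof.
intros Hc Hw He HK Hx HNK Hwx HM.
assert (HN : K3 + K3/eps < N).
{ apply Rmult_lt_compat_r with (r := K3) in HM; auto.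
  replace (N / K3 * K3) with N in HM by (field; lra).
  replace (K3 + K3/eps) with ((1 + 1/eps) * K3) by (field; lra). exact HM. }
assert (Ht : K3 = (K3/eps) * eps) by (field; lra).
assert (Htp : 0 < K3/eps) by (apply Rdiv_lt_0_compat; lra).
set (t := K3/eps) in *.
assert (HNKt : t < NK) by lra.
assert (H1 : x * c <= K3 * c) by (apply Rmult_le_compat_r; lra).
assert (H2 : t * (eps * c) < NK * (eps * c)).
{ apply Rmult_lt_compat_r; [apply Rmult_lt_0_compat|]; lra. }
assert (H3 : w * NK < (eps * c) * NK) by nra.
assert (H4 : w < eps * c) by (apply Rmult_lt_reg_r with NK; lra).
rewrite Rminus_0_r Rabs_right.
- apply Rmult_lt_reg_r with c; auto. replace (w / c * c) with w by (field; lra). lra.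
- apply Rle_ge; unfold Rdiv; apply Rmult_le_pos; [lra | left; apply Rinv_0_lt_compat; lra].
Qed.

Lemma real2 (D w c N K3 eps : R) : 0 < c -> 0 <= D -> w + D = c -> 0 < eps -> 0 < K3 ->
  D * K3 <= 16 * N * c -> N / K3 < eps / 16 -> Rabs (w / c - 1) < eps.
Proof.
intros Hc HD Hw He HK HDK HN.
replace w with (c - D) by lra; replace ((c - D) / c - 1) with (- (D / c)) by (field; lra).
rewrite Rabs_Ropp Rabs_right; [|apply Rle_ge; unfold Rdiv; apply Rmult_le_pos; [lra | left; apply Rinv_0_lt_compat; lra]].
assert (HN' : N < eps / 16 * K3).
{ apply Rmult_lt_compat_r with (r := K3) in HN; auto.
  replace (N / K3 * K3) with N in HN by (field; lra). exact HN. }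
assert (H1 : D * K3 < eps * c * K3).
{ apply Rle_lt_trans with (16 * N * c); auto.
  assert (16 * N * c < 16 * (eps / 16 * K3) * c).
  { apply Rmult_lt_compat_r; auto; lra. }
  replace (eps * c * K3) with (16 * (eps / 16 * K3) * c) by (field; lra). exact H. }
assert (H2 : D < eps * c) by (apply Rmult_lt_reg_r with K3; lra).
apply Rmult_lt_reg_r with c; auto. replace (D / c * c) with D by (field; lra). lra.
Qed.

Close Scope R_scope.

Lemma INR_pos_le (a b : nat) : (a <= b)%N -> (INR a <= INR b)%R.
Proof. by move=> h; apply: le_INR; apply/leP. Qed.

Theorem mainTheorem3 (n k : nat -> nat)
  (hk : forall m, (2 <= k m)%N) (hnk : forall m, (k m <= n m)%N) :
  (cv_infty (fun m => (INR (n m) / INR (k m) ^ 3)%R) ->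
     Un_cv (fun m => prob_equal_parts (n m) (k m)) 0%R) /\
  (Un_cv (fun m => (INR (n m) / INR (k m) ^ 3)%R) 0%R ->
     Un_cv (fun m => prob_equal_parts (n m) (k m)) 1%R).
Proof.
split.
- move=> Hinf eps Heps.
  have [M HM] := Hinf (1 + 1/eps)%R.
  exists M => m Hm; rewrite /R_dist /prob_equal_parts.
  have hK := hk m; have hN := hnk m; have hM := HM m Hm.
  have K1 : (1 <= INR (k m))%R by apply: (@INR_pos_le 1); exact: ltnW.
  apply: (@real1 (INR #|comps_with_equal_parts (n m) (k m)|) (INR #|compositions (n m) (k m)|)
     (INR (n m)) (INR (n m - (k m).-1)) (INR (k m) ^ 3) (INR (k m * k m * k m)) eps) => //.
  + apply: lt_0_INR; apply/ltP; apply: comp_pos_card => //; exact: ltnW.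
  + exact: pos_INR.
  + apply: pow_lt; lra.
  + rewrite !mult_INR /=; lra.
  + rewrite minus_INR; last by apply/leP; apply: leq_trans (leq_pred _) hN.
    have := @INR_pos_le _ _ (leq_pred (k m)).
    have : (INR (k m) <= INR (k m) ^ 3)%R by rewrite /=; nra.
    lra.
  + rewrite -!mult_INR; apply: INR_pos_le; exact: part1_full.
- move=> H0 eps Heps.
  have Hp : (0 < Rmin (eps / 16) (1 / 400))%R by apply: Rmin_pos; lra.
  have [M HM] := H0 _ Hp.
  exists M => m Hm; rewrite /R_dist /prob_equal_parts.
  have hK := hk m; have hN := hnk m; have hM := HM m Hm.
  rewrite /R_dist Rminus_0_r in hM.
  have hu := Rle_abs (INR (n m) / INR (k m) ^ 3)%R.
  have hu1 := Rmin_l (eps / 16)%R (1 / 400)%R; have hu2 := Rmin_r (eps / 16)%R (1 / 400)%R.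
  have K1 : (1 <= INR (k m))%R by apply: (@INR_pos_le 1); exact: ltnW.
  have K3p : (0 < INR (k m) ^ 3)%R by apply: pow_lt; lra.
  have NK : (INR (k m) <= INR (n m))%R by apply: INR_pos_le.
  have K20 : (20 <= k m)%N.
    case: (leqP 20 (k m)) => // h; exfalso.
    have h' : (INR (k m) <= 19)%R.
      have -> : 19%R = INR 19 by rewrite /=; lra.
      by apply: INR_pos_le; rewrite -ltnS.
    have : (INR (k m) / INR (k m) ^ 3 <= INR (n m) / INR (k m) ^ 3)%R.
      apply: Rmult_le_compat_r => //; left; apply: Rinv_0_lt_compat; lra.
    have -> : (INR (k m) / INR (k m) ^ 3 = 1 / (INR (k m) * INR (k m)))%R by rewrite /=; field; lra.
    move=> hh.
    have : (1 / 400 < 1 / (INR (k m) * INR (k m)))%R.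
      apply: (@Rmult_lt_reg_r (400 * (INR (k m) * INR (k m)))%R); first by nra.
      have -> : (1 / 400 * (400 * (INR (k m) * INR (k m))) = INR (k m) * INR (k m))%R by field.
      have -> : (1 / (INR (k m) * INR (k m)) * (400 * (INR (k m) * INR (k m))) = 400)%R by field; nra.
      nra.
    lra.
  rewrite /Rdist; refine (@real2 (INR #|distc (n m) (k m)|) (INR #|comps_with_equal_parts (n m) (k m)|)
     (INR #|compositions (n m) (k m)|) (INR (n m)) (INR (k m) ^ 3) eps _ _ _ _ _ _ _).
  + apply: lt_0_INR; apply/ltP; apply: comp_pos_card => //; exact: ltnW.
  + exact: pos_INR.
  + by rewrite -(cwe_dist (n m) (k m)) plus_INR.
  + lra.
  + exact: K3p.
  + have -> : (INR (k m) ^ 3 = INR (k m * k m * k m))%R by rewrite !mult_INR /=; ring.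
    have -> : 16%R = INR 16 by rewrite /=; lra.
    rewrite -!mult_INR; apply: INR_pos_le; exact: part2_full.
  + lra.
Qed.
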